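(* Let $G$ be a graph of order $n\ge 3$, let $\mathbf{x}=(x_1,\ldots,x_n)$ be a nonnegative unit eigenvector of $Q(G)$ for the eigenvalue $q(G)$, and let $u$ be a vertex with $x_u=\min\{x_1,\ldots,x_n\}$. Then \[ \frac{q(G-u)}{n-2}\ge \frac{q(G)}{n-1}\left(1+\frac{1-nx_u^2}{(n-2)(1-x_u^2)}\right)-\frac{1-nx_u^2}{(n-2)(1-x_u^2)}. \]
   Context: All graphs are finite and simple. $Q(G)=D(G)+A(G)$ is the signless Laplacian ($D(G)$ the diagonal degree matrix, $A(G)$ the adjacency matrix) and $q(G)$ its largest eigenvalue. ''Unit'' means Euclidean norm $1$; the coordinate $x_v$ corresponds to vertex $v$. $G-u$ denotes the graph obtained by deleting $u$ and all incident edges. *)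

(* Defs.v *)
From HB Require Import structures.
From mathcomp Require Import all_boot all_order all_algebra.
From mathcomp Require Export reals.
Set Implicit Arguments. Unset Strict Implicit. Unset Printing Implicit Defensive.
Import Order.TTheory GRing.Theory Num.Theory.
Local Open Scope ring_scope.

Definition simple_graph (k : nat) (e : rel 'I_k) : Prop :=
  (forall i j, e i j = e j i) /\ (forall i, e i i = false).

Definition deg (k : nat) (e : rel 'I_k) (i : 'I_k) : nat := #|[set j | e i j]|.

Definition adjmx (R : nzRingType) (k : nat) (e : rel 'I_k) : 'M[R]_k :=
  \matrix_(i, j) (if e i j then 1 else 0).
Definition degmx (R : nzRingType) (k : nat) (e : rel 'I_k) : 'M[R]_k :=
  \matrix_(i, j) (if i == j then (deg e i)%:R else 0).
Definition signless_laplacian (R : nzRingType) (k : nat) (e : rel 'I_k) : 'M[R]_k :=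
  degmx R e + adjmx R e.

Definition del_vertex (k : nat) (e : rel 'I_k) (u : 'I_k) : rel 'I_k.-1 :=
  fun i j => e (lift u i) (lift u j).

Definition is_largest_eigenvalue (R : realType) (k : nat) (A : 'M[R]_k) (l : R) : Prop :=
  eigenvalue A l /\ (forall mu, eigenvalue A mu -> mu <= l).

(* Main.v *)
Require Import Defs.
From HB Require Import structures.
From mathcomp Require Import all_boot all_order all_algebra.
From mathcomp Require Import reals.
From mathcomp Require Import complex lra ring.
Import Order.TTheory GRing.Theory Num.Theory Num.Def.
Local Open Scope ring_scope.
Set Implicit Arguments. Unset Strict Implicit. Unset Printing Implicit Defensive.

Section Ray.
Local Open Scope sesquilinear_scope.
Variable R : realType.
Local Notation C := (R[i]).
Local Notation toC := (real_complex R).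

Lemma toC_real (x : R) : toC x \is Num.real.
Proof. by apply/complex_realP; exists x. Qed.

Lemma conj_toC (x : R) : conjC (toC x) = toC x.
Proof. exact/conj_Creal/toC_real. Qed.

Lemma spectral_bound m (A : 'M[C]_m) (z : 'rV[C]_m) : (0 < m)%N ->
  A \is hermsymmx ->
  exists2 r : R, eigenvalue A (toC r) &
     (z *m A *m z^t*) 0 0 <= toC r * (z *m z^t*) 0 0.
Proof.
move=> m0 hA.
set P := spectralmx A; set d := spectral_diag A.
have PU : P \is unitarymx := spectral_unitarymx A.
have Pu := unitarymx_unit PU.
have dreal := hermitian_spectral_diag_real hA.
have eA : A = P^t* *m diag_mx d *m P.
  by rewrite -invmx_unitary //; apply/orthomx_spectralP/hermitian_normalmx.
have PPt : P *m P^t* = 1%:M by apply/unitarymxP.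
have PtP : P^t* *m P = 1%:M by rewrite -invmx_unitary // mulVmx.
have dE i : d 0 i = toC (complex.Re (d 0 i)).
  by rewrite RRe_real //; apply: (mxOverP dreal).
pose k := [arg max_(k > Ordinal m0) complex.Re (d 0 k)]%O.
have kmax i : complex.Re (d 0 i) <= complex.Re (d 0 k).
  rewrite /k; case: arg_maxP => // j _ H; exact: H.
exists (complex.Re (d 0 k)).
  apply/eigenvalueP; exists (row k P).
    rewrite -row_mul eA !mulmxA PPt mul1mx mul_diag_mx -dE.
    by apply/rowP => j; rewrite !mxE.
  apply/eqP => h0.
  have := congr1 (fun M : 'M_(1, m) => M 0 k) (row_mul k P (P^t*)).
  by rewrite h0 mul0mx PPt !mxE eqxx /= => /eqP; rewrite oner_eq0.
pose w := z *m P^t*.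
have wE : w^t* = P *m z^t* by rewrite /w trmx_mul map_mxM trmxCK.
have e1 : z *m A *m z^t* = w *m diag_mx d *m w^t*.
  by rewrite wE eA /w !mulmxA.
have e2 : z *m z^t* = w *m w^t*.
  by rewrite wE /w -(mulmxA z (P^t*)) (mulmxA (P^t*)) PtP mul1mx.
rewrite e1 e2 mul_mx_diag !mxE mulr_sumr.
apply: ler_sum => i _; rewrite !mxE.
set s := \sum_j _.
rewrite -mulrA mulrCA mulrC [X in _ <= X]mulrC.
apply: ler_wpM2l; first exact: mul_conjC_ge0.
by rewrite [d 0 i]dE lecR.
Qed.

Local Notation MtoC := (map_mx toC).

Lemma rayleigh m (B : 'M[R]_m) (y : 'rV[R]_m) (l : R) : (0 < m)%N ->
  B^T = B -> eigenvalue B l /\ (forall mu, eigenvalue B mu -> mu <= l) ->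
  (y *m B *m y^T) 0 0 <= l * (y *m y^T) 0 0.
Proof.
move=> m0 BT [_ lmax].
have hA : MtoC B \is hermsymmx.
  apply/is_hermitianmxP; rewrite expr0 scale1r; apply/matrixP => i j.
  by rewrite !mxE conj_toC -{1}BT mxE.
have zt : (MtoC y)^t* = MtoC (y^T).
  by apply/matrixP => i j; rewrite !mxE conj_toC.
have [r hr hb] := @spectral_bound m (MtoC B) (MtoC y) m0 hA.
have rB : eigenvalue B r.
  by move: hr; rewrite !eigenvalue_root_char -map_char_poly fmorph_root.
have := hb; rewrite zt -!map_mxM !mxE -rmorphM lecR => h.
apply: (le_trans h); apply: ler_wpM2r; last exact: lmax.
apply: sumr_ge0 => i _; rewrite !mxE -expr2; exact: sqr_ge0.
Qed.
End Ray.
Lemma sum_split (R : realType) n (u : 'I_n) (F : 'I_n -> R) :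
  \sum_i F i = F u + \sum_(i < n.-1) F (lift u i).
Proof. by rewrite (bigD1_ord u). Qed.

Lemma degE (R : realType) n (e : rel 'I_n) i :
  (deg e i)%:R = \sum_j (if e i j then 1 else 0) :> R.
Proof.
rewrite /deg -sum1_card natr_sum big_mkcond /=; apply: eq_bigr => j _.
by rewrite inE; case: (e i j).
Qed.

Section M.
Variables (R : realType) (n : nat) (e : rel 'I_n) (u : 'I_n).
Hypothesis sg : simple_graph e.
Local Notation E I J := (if e I J then 1 else 0 : R).
Local Notation Q := (signless_laplacian R e).
Local Notation Q' := (signless_laplacian R (del_vertex e u)).

Lemma QE I J : Q I J = (if I == J then (deg e I)%:R else 0) + E I J.
Proof. by rewrite !mxE. Qed.

Lemma Q'E i j : Q' i j = Q (lift u i) (lift u j) - (if i == j then E (lift u i) u else 0).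
Proof.
rewrite !mxE (inj_eq lift_inj) /del_vertex.
case: eqP => [->|_]; last by rewrite !add0r subr0.
rewrite !degE (sum_split u (fun J => E (lift u j) J)) /=.
set S := \sum_(i < n.-1) _; rewrite -/S.
case: (e (lift u j) u) => /=; rewrite ?add0r ?addr0 ?subr0 //.
lra.
Qed.

Lemma Q'sym : Q'^T = Q'.
Proof.
apply/matrixP => i j; rewrite !mxE /del_vertex (proj1 sg).
by case: eqVneq => [->|]; rewrite ?eqxx // eq_sym => /negbTE ->.
Qed.
End M.

Theorem lemma3p2 (R : realType) (n : nat) (e : rel 'I_n) (u : 'I_n)
    (q q' : R) (x : 'cV[R]_n) :
  (3 <= n)%N ->
  simple_graph e ->
  is_largest_eigenvalue (signless_laplacian R e) q ->
  is_largest_eigenvalue (signless_laplacian R (del_vertex e u)) q' ->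
  (forall i, 0 <= x i 0) ->
  \sum_i (x i 0) ^+ 2 = 1 ->
  signless_laplacian R e *m x = q *: x ->
  (forall i, x u 0 <= x i 0) ->
  let t := (1 - n%:R * (x u 0) ^+ 2) / ((n%:R - 2) * (1 - (x u 0) ^+ 2)) in
  q' / (n%:R - 2) >= q / (n%:R - 1) * (1 + t) - t.
Proof.
move=> n3 sg _ hq' x0 xs hx xmin; cbv zeta.
have m0 : (0 < n.-1)%N by rewrite -subn1 subn_gt0 (leq_trans _ n3).
pose y : 'rV[R]_n.-1 := \row_i x (lift u i) 0.
have ray := rayleigh y m0 (@Q'sym R n e u sg) hq'.
have yQy : (y *m signless_laplacian R (del_vertex e u) *m y^T) 0 0 =
    \sum_i x (lift u i) 0 * \sum_j signless_laplacian R (del_vertex e u) i j * x (lift u j) 0.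
  rewrite !mxE; under eq_bigr do rewrite !mxE mulr_suml.
  rewrite exchange_big; apply: eq_bigr => i _; rewrite mulr_sumr.
  by apply: eq_bigr => j _; rewrite /y !mxE mulrA.
have yy : (y *m y^T) 0 0 = \sum_i x (lift u i) 0 ^+ 2.
  by rewrite !mxE; apply: eq_bigr => i _; rewrite /y !mxE expr2.
set a := x u 0.
have hrow I : \sum_J signless_laplacian R e I J * x J 0 = q * x I 0.
  by have := congr1 (fun M : 'M[R]_(n,1) => M I 0) hx; rewrite !mxE.
have Esym I J : (if e I J then 1 else 0 : R) = (if e J I then 1 else 0).
  by rewrite (proj1 sg).
have F6 i : \sum_j signless_laplacian R e (lift u i) (lift u j) * x (lift u j) 0
    = q * x (lift u i) 0 - (if e u (lift u i) then 1 else 0) * a.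
  have := hrow (lift u i); rewrite (sum_split u) QE eq_sym (negbTE (neq_lift u i)).
  rewrite add0r Esym => <-; rewrite /a; lra.
have Fin i : \sum_j signless_laplacian R (del_vertex e u) i j * x (lift u j) 0
    = q * x (lift u i) 0 - (if e u (lift u i) then 1 else 0) * a
      - (if e u (lift u i) then 1 else 0) * x (lift u i) 0.
  rewrite -F6 -Esym; under eq_bigr do rewrite Q'E mulrBl.
  rewrite sumrB [X in _ - X](bigD1 i) //= eqxx [X in _ - (_ + X)]big1 ?addr0 //.
  by move=> j /negbTE; rewrite eq_sym => ->; rewrite mul0r.
set d : R := (deg e u)%:R.
have F4 : d = \sum_j (if e u (lift u j) then 1 else 0).
  by rewrite /d degE (sum_split u) (proj2 sg u) add0r.
set S := \sum_j (if e u (lift u j) then 1 else 0) * x (lift u j) 0.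
have F5 : d * a + S = q * a.
  have := hrow u; rewrite (sum_split u) QE eqxx (proj2 sg u) addr0 => <-.
  congr (_ + _); apply: eq_bigr => j _.
  by rewrite QE (negbTE (neq_lift u j)) add0r.
have aS : a * S = (q * a - d * a) * a by rewrite -F5; ring.
set T := \sum_i x (lift u i) 0 ^+ 2.
set N := \sum_i (if e u (lift u i) then 1 else 0) * x (lift u i) 0 ^+ 2.
have F8 : a ^+ 2 + T = 1 by rewrite -xs (sum_split u).
have sq I : a ^+ 2 <= x I 0 ^+ 2.
  have := x0 u; have := xmin I; rewrite -/a => h1 h2; nra.
have hsum : \sum_(i < n.-1) a ^+ 2 = (n%:R - 1) * a ^+ 2.
  have nm : (n.-1)%:R = n%:R - 1 :> R by rewrite -subn1 natrB // (leq_trans _ n3).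
  by rewrite sumr_const card_ord -(mulr_natr (a ^+ 2)) nm mulrC.
have hT : T >= (n%:R - 1) * a ^+ 2.
  by rewrite -hsum; apply: ler_sum => i _; apply: sq.
have key : T + d * a ^+ 2 - N >= (n%:R - 1) * a ^+ 2.
  have -> : T + d * a ^+ 2 - N =
      \sum_i (x (lift u i) 0 ^+ 2 + (if e u (lift u i) then 1 else 0) * (a ^+ 2 - x (lift u i) 0 ^+ 2)).
    rewrite F4 mulr_suml -big_split -sumrB; apply: eq_bigr => i _ /=; ring.
  rewrite -hsum; apply: ler_sum => i _.
  by case: (e u (lift u i)); rewrite ?mul1r ?mul0r ?addr0 //; lra.
have eQ : (y *m signless_laplacian R (del_vertex e u) *m y^T) 0 0 = q * T - a * S - N.
  rewrite yQy; under eq_bigr do rewrite Fin.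
  rewrite /T /S /N mulr_sumr mulr_sumr -!sumrB; apply: eq_bigr => i _; ring.
have n3' : (3 : R) <= n%:R by rewrite (ler_nat R 3 n).
have s1 : 1 - a ^+ 2 > 0 by nra.
have h : q' * (1 - a ^+ 2) >= q * (1 - 2 * a ^+ 2) - (1 - n%:R * a ^+ 2).
  have eT : T = 1 - a ^+ 2 by lra.
  have aS2 : a * S = q * a ^+ 2 - d * a ^+ 2 by rewrite aS; ring.
  rewrite yy -/T eQ eT in ray; rewrite eT in key; lra.
have n2 : n%:R - 2 != 0 :> R by rewrite subr_eq0; apply/eqP; lra.
have n1 : n%:R - 1 != 0 :> R by rewrite subr_eq0; apply/eqP; lra.
have s1' : 1 - a ^+ 2 != 0 by rewrite gt_eqF.
have -> : q' / (n%:R - 2) = q' * (1 - a ^+ 2) / ((n%:R - 2) * (1 - a ^+ 2)).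
  by field; rewrite n2 s1'.
have -> : q / (n%:R - 1) *
  (1 + (1 - n%:R * a ^+ 2) / ((n%:R - 2) * (1 - a ^+ 2))) -
  (1 - n%:R * a ^+ 2) / ((n%:R - 2) * (1 - a ^+ 2)) =
  (q * (1 - 2 * a ^+ 2) - (1 - n%:R * a ^+ 2)) / ((n%:R - 2) * (1 - a ^+ 2)).
  by field; rewrite n2 n1 s1'.
apply: ler_wpM2r => //; rewrite invr_ge0; apply: mulr_ge0; lra.
Qed.
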